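(* Let $\rho$ be a geometric Nielsen 1-chain and let $p_0,p_1,\dots,p_m$ ($m\ge1$) be an edge-path in $T_\rho$ with $p_0=p_m$. Then either $p_j=p_k$ for some distinct indices $0\le j,k<m$, or there exists an orientation on this edge-path.
   Context: Setup: $\mathbb F$ finitely generated free, $\Gamma$ finite connected graph with $\pi_1(\Gamma)\cong\mathbb F$, $H\subset\Gamma$ a subgraph, $f$ a homotopy equivalence with $f(H)\subseteq H$ and fixed lift $\tilde f$ to the universal cover $\widetilde\Gamma$ ($\mathbb F$ acting by deck transformations), $\widetilde H$ the preimage of $H$. 1-chains $x=\sum_ex_ee$ (reversing an edge's orientation negates its coefficient), $\mathrm{supp}(x)=\{e:x_e\ne0\}$; $\pi_H^\perp$ sets coefficients on edges of $\widetilde H$ to $0$; $[u,v]$ is the 1-chain of the reduced edge-path from vertex $u$ to vertex $v$ (coefficient $\pm1$ on its edges). A geometric Nielsen 1-chain is $\rho=\pi_H^\perp([u,v])$ with $\tilde f(u)=u,\tilde f(v)=v$ such that (GNC1) for distinct $g_1,g_2\in\mathbb F$, $\mathrm{supp}(g_1\rho)\cap\mathrm{supp}(g_2\rho)$ is empty or a single edge; (GNC2) each edge $e\notin\widetilde H$ lies in $\mathrm{supp}(g\rho)$ for exactly two elements $g_1,g_2$, and is the unique edge of $\mathrm{supp}(g_1\rho)\cap\mathrm{supp}(g_2\rho)$; (GNC3) some non-commuting $g_1,g_2$ have $\mathrm{supp}(\rho)\cap\mathrm{supp}(g_i\rho)\ne\emptyset$. The graph $T_\rho$ has vertex set $\mathbb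 F$ and an edge between distinct $g_1,g_2$ iff $\mathrm{supp}(g_1\rho)\cap\mathrm{supp}(g_2\rho)\ne\emptyset$. An edge-path $p_0,\dots,p_m$ is a sequence of vertices with $p_{j-1},p_j$ adjacent. For a closed edge-path ($p_0=p_m$), take indices mod $m$, let $g_j=p_j$, and let $e_j$ be the unique edge in $\mathrm{supp}(g_{j-1}\rho)\cap\mathrm{supp}(g_j\rho)$; then $e_j,e_{j+1}\in\mathrm{supp}(g_j\rho)$. An orientation on the path is a choice, for each index $j$, of an orientation of $e_j$ (choices for different indices are independent) such that $(g_j\rho)_{e_j}=-(g_j\rho)_{e_{j+1}}$ for all $0\le j<m$. *)

(* Defs.v *)
From mathcomp Require Import all_boot all_algebra.
Set Implicit Arguments. Unset Strict Implicit. Unset Printing Implicit Defensive.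
Import GRing.Theory.
Local Open Scope ring_scope.

Record group := Group {
  gcar :> Type;
  gmul : gcar -> gcar -> gcar;
  gone : gcar;
  ginv : gcar -> gcar;
  gmulA : forall x y z, gmul x (gmul y z) = gmul (gmul x y) z;
  gmul1 : forall x, gmul gone x = x;
  gmulV : forall x, gmul (ginv x) x = gone }.

Record sgraph := SGraph {
  vert : Type;
  edge : eqType;
  src : edge -> vert;
  rev : edge -> edge;
  revK : forall e, rev (rev e) = e;
  rev_neq : forall e, rev e <> e }.

Definition tgt (X : sgraph) (e : edge X) : vert X := src (rev e).

Fixpoint is_path (X : sgraph) (u : vert X) (p : seq (edge X)) (v : vert X) : Prop :=
  match p with
  | [::] => u = v
  | e :: q => src e = u /\ is_path (tgt e) q v
  end.

Fixpoint reduced (X : sgraph) (p : seq (edge X)) : Prop :=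
  match p with
  | e :: ((e' :: _) as q) => e' <> rev e /\ reduced q
  | _ => True
  end.

Definition is_tree (X : sgraph) : Prop :=
  (forall u v : vert X, exists p, is_path u p v) /\
  (forall (u : vert X) p, is_path u p u -> reduced p -> p = [::]).

Record action (F : group) (X : sgraph) := Action {
  actV : F -> vert X -> vert X;
  actE : F -> edge X -> edge X;
  act_src : forall g e, src (actE g e) = actV g (src e);
  act_rev : forall g e, actE g (rev e) = rev (actE g e);
  actV1 : forall x, actV (gone F) x = x;
  actVM : forall g h x, actV (gmul g h) x = actV g (actV h x);
  actE1 : forall e, actE (gone F) e = e;
  actEM : forall g h e, actE (gmul g h) e = actE g (actE h e) }.

(* F acts as the deck group of the universal cover X -> X/F = Gamma, Gamma finite:
   X is a tree, the action is free (on vertices, and without edge inversions)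
   and cofinite (finitely many orbits of vertices and of edges). *)
Definition deck_action (F : group) (X : sgraph) (A : action F X) : Prop :=
  [/\ is_tree X,
      (forall g x, actV A g x = x -> g = gone F),
      (forall g e, actE A g e <> rev e),
      (exists n (a : 'I_n -> vert X), forall x, exists i g, x = actV A g (a i)) &
      (exists n (a : 'I_n -> edge X), forall e, exists i g, e = actE A g (a i))].

(* preimage tilde H of a subgraph H of Gamma = X/F : an F-invariant subgraph *)
Definition invariant_subgraph (F : group) (X : sgraph) (A : action F X)
    (HV : pred (vert X)) (HE : pred (edge X)) : Prop :=
  [/\ (forall e, HE (rev e) = HE e),
      (forall e, HE e -> HV (src e)),
      (forall g x, HV (actV A g x) = HV x) &
      (forall g e, HE (actE A g e) = HE e)].

(* a lift tilde f of a homotopy equivalence f of Gamma with f(H) <= H: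
   vertices go to vertices, edges to edge-paths, equivariantly with respect to
   the automorphism Phi of F = pi_1(Gamma) induced by f (f is a homotopy
   equivalence iff Phi is an automorphism). *)
Record lift_data (F : group) (X : sgraph) := LiftData {
  lPhi : F -> F;
  lV : vert X -> vert X;
  lE : edge X -> seq (edge X) }.

Definition lift_of_he_preserving_H (F : group) (X : sgraph) (A : action F X)
    (HV : pred (vert X)) (HE : pred (edge X)) (f : lift_data F X) : Prop :=
  (forall g h, lPhi f (gmul g h) = gmul (lPhi f g) (lPhi f h)) /\
  bijective (lPhi f) /\
  (forall e, is_path (lV f (src e)) (lE f e) (lV f (tgt e))) /\
  (forall e, lE f (rev e) = seq.rev (map (@rev X) (lE f e))) /\
  (forall g x, lV f (actV A g x) = actV A (lPhi f g) (lV f x)) /\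
  (forall g e, lE f (actE A g e) = map (actE A (lPhi f g)) (lE f e)) /\
  (forall x, HV x -> HV (lV f x)) /\
  (forall e, HE e -> all HE (lE f e)).

(* a 1-chain: coefficient on each oriented edge, x (rev e) = - x e *)
Definition chain (X : sgraph) := edge X -> int.

(* the chain of an edge-path (for a reduced path in a tree: [u,v]) *)
Definition path_chain (X : sgraph) (p : seq (edge X)) : chain X :=
  fun e => \sum_(d <- p) ((if e == d then 1 else 0) - (if e == rev d then 1 else 0)).

Definition proj_perp (X : sgraph) (HE : pred (edge X)) (x : chain X) : chain X :=
  fun e => if HE e then 0 else x e.

Definition gchain (F : group) (X : sgraph) (A : action F X) (g : F) (x : chain X)
  : chain X := fun e => x (actE A (ginv g) e).

Definition supp (X : sgraph) (x : chain X) (e : edge X) : bool := x e != 0.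

Definition same_edge (X : sgraph) (e e' : edge X) : Prop := e' = e \/ e' = rev e.

Definition GNC1 (F : group) (X : sgraph) (A : action F X) (rho : chain X) : Prop :=
  forall g1 g2 : F, g1 <> g2 ->
    (forall e, ~ (supp (gchain A g1 rho) e /\ supp (gchain A g2 rho) e)) \/
    (exists e, [/\ supp (gchain A g1 rho) e, supp (gchain A g2 rho) e &
       forall e', supp (gchain A g1 rho) e' -> supp (gchain A g2 rho) e' ->
                  same_edge e e']).

Definition GNC2 (F : group) (X : sgraph) (A : action F X) (HE : pred (edge X))
    (rho : chain X) : Prop :=
  forall e, ~~ HE e ->
    exists g1 g2 : F, [/\ g1 <> g2, supp (gchain A g1 rho) e, supp (gchain A g2 rho) e,
      (forall g, supp (gchain A g rho) e -> g = g1 \/ g = g2) &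
      (forall e', supp (gchain A g1 rho) e' -> supp (gchain A g2 rho) e' ->
                  same_edge e e')].

Definition GNC3 (F : group) (X : sgraph) (A : action F X) (rho : chain X) : Prop :=
  exists g1 g2 : F, [/\ gmul g1 g2 <> gmul g2 g1,
    (exists e, supp rho e /\ supp (gchain A g1 rho) e) &
    (exists e, supp rho e /\ supp (gchain A g2 rho) e)].

Definition geometric_nielsen (F : group) (X : sgraph) (A : action F X)
    (HE : pred (edge X)) (f : lift_data F X) (rho : chain X) : Prop :=
  exists (u v : vert X) (p : seq (edge X)),
    lV f u = u /\ lV f v = v /\ is_path u p v /\ reduced p /\
    rho = proj_perp HE (path_chain p) /\
    GNC1 A rho /\ GNC2 A HE rho /\ GNC3 A rho.

Definition T_adj (F : group) (X : sgraph) (A : action F X) (rho : chain X)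
    (g1 g2 : F) : Prop :=
  g1 <> g2 /\ exists e, supp (gchain A g1 rho) e /\ supp (gchain A g2 rho) e.

Definition T_edge_path (F : group) (X : sgraph) (A : action F X) (rho : chain X)
    (p : nat -> F) (m : nat) : Prop :=
  forall j, (1 <= j <= m)%N -> T_adj A rho (p j.-1) (p j).

(* an orientation on a closed edge-path (p 0 = p m): for each index j (mod m,
   index 0 identified with index m) an oriented representative eps j of the
   edge e_j in supp(g_{j-1} rho) /\ supp(g_j rho), such that
   (g_j rho)_{e_j} = - (g_j rho)_{e_{j+1}} for 0 <= j < m. *)
Definition orientation (F : group) (X : sgraph) (A : action F X) (rho : chain X)
    (p : nat -> F) (m : nat) : Prop :=
  exists eps : nat -> edge X,
    [/\ eps 0%N = eps m,
        (forall j, (1 <= j <= m)%N ->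
           supp (gchain A (p j.-1) rho) (eps j) /\ supp (gchain A (p j) rho) (eps j)) &
        (forall j, (j < m)%N ->
           gchain A (p j) rho (eps j) = - gchain A (p j) rho (eps j.+1))].

(* Main.v *)
Require Import Defs.
From mathcomp Require Import all_boot all_algebra.
From Stdlib Require Import ClassicalEpsilon Classical.
From mathcomp Require Import zify.
Set Implicit Arguments. Unset Strict Implicit. Unset Printing Implicit Defensive.
Import GRing.Theory.
Local Open Scope ring_scope.

Notation erev := Defs.rev.

Lemma tgt_rev (X : sgraph) (e : edge X) : tgt (erev e) = src e.
Proof. by rewrite /tgt Defs.revK. Qed.

Lemma is_path_cat (X : sgraph) (u w v : vert X) l1 l2 :
  is_path u l1 w -> is_path w l2 v -> is_path u (l1 ++ l2) v.
Proof.
elim: l1 u => [|e l IH] u /=; first by move=> ->.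
by case=> -> H1 H2; split=> //; apply: IH H1 H2.
Qed.

Lemma is_path_catE (X : sgraph) (u v : vert X) l1 l2 :
  is_path u (l1 ++ l2) v -> exists w, is_path u l1 w /\ is_path w l2 v.
Proof.
elim: l1 u => [|e l IH] u /=; first by move=> H; exists u.
by case=> Hs /IH [w [H1 H2]]; exists w.
Qed.

Definition term (X : sgraph) (e d : edge X) : int :=
  (if e == d then 1 else 0) - (if e == erev d then 1 else 0).

Lemma pc_cons (X : sgraph) (d : edge X) l e :
  path_chain (d :: l) e = term e d + path_chain l e.
Proof. by rewrite /path_chain /= big_cons. Qed.

Lemma pc_nil (X : sgraph) (e : edge X) : path_chain [::] e = 0.
Proof. by rewrite /path_chain /= big_nil. Qed.

Lemma pc_cat (X : sgraph) (l1 l2 : seq (edge X)) e :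
  path_chain (l1 ++ l2) e = path_chain l1 e + path_chain l2 e.
Proof. by rewrite /path_chain /= big_cat. Qed.

Lemma rev_inj (X : sgraph) : injective (@erev X).
Proof. by move=> a b H; rewrite -(Defs.revK a) H Defs.revK. Qed.

Lemma eq_rev (X : sgraph) (e d : edge X) : (erev e == d) = (e == erev d).
Proof. by apply/eqP/eqP => [<-|->]; rewrite Defs.revK. Qed.

Lemma term_revl (X : sgraph) (e d : edge X) : term (erev e) d = - term e d.
Proof.
rewrite /term eq_rev (inj_eq (@rev_inj X)).
by case: (e == d); case: (e == erev d); rewrite /= ?subr0 ?sub0r ?opprK ?subrr ?opprB.
Qed.

Lemma term_revr (X : sgraph) (e d : edge X) : term e (erev d) = - term e d.
Proof. by rewrite /term Defs.revK; case: (e == d); case: (e == erev d). Qed.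

Lemma term_self (X : sgraph) (e : edge X) : term e e = 1.
Proof.
rewrite /term eqxx; case: eqP => [H|_]; last by rewrite subr0.
by exfalso; apply: (@rev_neq X e); rewrite -H.
Qed.

Lemma term_selfr (X : sgraph) (e : edge X) : term e (erev e) = -1.
Proof. by rewrite term_revr term_self. Qed.

Lemma pc_revl (X : sgraph) (l : seq (edge X)) e :
  path_chain l (erev e) = - path_chain l e.
Proof.
elim: l => [|d l IH]; first by rewrite !pc_nil oppr0.
by rewrite !pc_cons IH term_revl (opprD (term e d)).
Qed.

Definition revp (X : sgraph) (l : seq (edge X)) := seq.rev (map (@erev X) l).

Lemma is_path_revp (X : sgraph) (u v : vert X) l :
  is_path u l v -> is_path v (revp l) u.
Proof.
elim: l u => [|e l IH] u /=; first by move=> ->.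
case=> Hs /IH H; rewrite /revp map_cons rev_cons -cats1.
apply: is_path_cat H _ => /=; split=> //; by rewrite tgt_rev.
Qed.

Lemma pc_revp (X : sgraph) (l : seq (edge X)) e :
  path_chain (revp l) e = - path_chain l e.
Proof.
elim: l => [|d l IH]; first by rewrite /revp /= !pc_nil oppr0.
rewrite /revp map_cons rev_cons -cats1 pc_cat -/(revp l) IH pc_cons pc_nil term_revr. by rewrite addr0 pc_cons (opprD (term e d)) addrC.

Qed.

Lemma reduced_cons (X : sgraph) (x : edge X) l : reduced (x :: l) -> reduced l.
Proof. by case: l => //= y l []. Qed.

Lemma reduced_catr (X : sgraph) (a b : seq (edge X)) : reduced (a ++ b) -> reduced b.
Proof. by elim: a => //= x a IH /reduced_cons. Qed.

Lemma reduced_catl (X : sgraph) (a b : seq (edge X)) : reduced (a ++ b) -> reduced a.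
Proof.
elim: a => //= x [|y a] IH //=.
by case=> H1 H2; split=> //; apply: IH.
Qed.

Lemma reduce (X : sgraph) (u v : vert X) l : is_path u l v ->
  exists l', [/\ is_path u l' v, reduced l' & forall e, path_chain l' e = path_chain l e].
Proof.
elim: l u => [|d l IH] u /=.
  by move=> ->; exists [::].
case=> Hs /IH [[|d' l'] [Hp Hr Hc]].
  exists [:: d]; split=> //= e; by rewrite !pc_cons -Hc.
case: (d' =P erev d) => Hd.
  exists l'; split.
  - by move: Hp => /= [_]; rewrite Hd tgt_rev Hs.
  - exact: reduced_cons Hr.
  - by move=> e; rewrite !pc_cons -Hc pc_cons Hd term_revr addrA (addrN (term e d)) add0r.
exists (d :: d' :: l'); split=> //= e.
by rewrite pc_cons Hc pc_cons.
Qed.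

Lemma tree_closed (X : sgraph) (T : is_tree X) (u : vert X) l :
  is_path u l u -> forall e, path_chain l e = 0.
Proof.
move=> /reduce [l' [Hp Hr Hc]] e; rewrite -Hc.
by rewrite ((proj2 T) _ _ Hp Hr) pc_nil.
Qed.

Definition side (X : sgraph) (T : is_tree X) (e : edge X) (v : vert X) : int :=
  path_chain (proj1_sig (constructive_indefinite_description _ (proj1 T (src e) v))) e.

Lemma side_spec (X : sgraph) (T : is_tree X) (e : edge X) v l :
  is_path (src e) l v -> side T e v = path_chain l e.
Proof.
move=> Hl; rewrite /side; case: constructive_indefinite_description => l0 H0 /=.
have := tree_closed T (is_path_cat H0 (is_path_revp Hl)) e.
rewrite pc_cat pc_revp => /eqP; rewrite subr_eq0 => /eqP //.
Qed.

Lemma side_diff (X : sgraph) (T : is_tree X) (e : edge X) a b l :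
  is_path a l b -> side T e b = side T e a + path_chain l e.
Proof.
move=> Hl; have [l0 H0] := proj1 T (src e) a.
by rewrite (side_spec T H0) (side_spec T (is_path_cat H0 Hl)) pc_cat.
Qed.

Lemma side_src (X : sgraph) (T : is_tree X) (e : edge X) : side T e (src e) = 0.
Proof. by rewrite (@side_spec _ T e _ [::]) ?pc_nil. Qed.

Lemma side_tgt (X : sgraph) (T : is_tree X) (e : edge X) : side T e (tgt e) = 1.
Proof. by rewrite (@side_spec _ T e _ [:: e]) ?pc_cons ?pc_nil ?term_self ?addr0. Qed.

Lemma side_rev (X : sgraph) (T : is_tree X) (e : edge X) v :
  side T (erev e) v = 1 - side T e v.
Proof.
have [l Hl] := proj1 T (tgt e) v.
have Hl' : is_path (src (erev e)) l v by [].
rewrite (side_spec T Hl') pc_revl (side_diff T e Hl) side_tgt.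
by rewrite opprD addrA subrr add0r.
Qed.

Lemma first_split (T : Type) (a : pred T) (l : seq T) : has a l ->
  exists l1 x l2, [/\ l = l1 ++ x :: l2, a x & ~~ has a l1].
Proof.
elim: l => //= x l IH; case Hx: (a x) => /=.
  by move=> _; exists [::], x, l.
move=> /IH [l1 [y [l2 [-> Hy Hn]]]]; exists (x :: l1), y, l2; split=> //=.
by rewrite Hx.
Qed.

Definition isE (X : sgraph) (d : edge X) := fun x : edge X => (x == d) || (x == erev d).
Definition memEd (X : sgraph) (l : seq (edge X)) (d : edge X) := has (isE d) l.

Lemma term_notE (X : sgraph) (d x : edge X) : ~~ isE d x -> term d x = 0.
Proof.
rewrite /isE negb_or => /andP [H1 H2]; rewrite /term eq_sym (negbTE H1).
case: eqP => [H|_]; last by rewrite subrr.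
by move: H2; rewrite H Defs.revK eqxx.
Qed.

Lemma pc_notmem (X : sgraph) (l : seq (edge X)) d : ~~ memEd l d -> path_chain l d = 0.
Proof.
elim: l => [|x l IH]; first by rewrite pc_nil.
rewrite /memEd /= negb_or => /andP [Hx Hl].
by rewrite pc_cons term_notE // IH // addr0.
Qed.

Lemma pc_mem (X : sgraph) (l : seq (edge X)) d : path_chain l d != 0 -> memEd l d.
Proof. by apply: contraNT => /pc_notmem ->. Qed.

Lemma simple (X : sgraph) (T : is_tree X) (u v : vert X) l d :
  is_path u l v -> reduced l -> memEd l d ->
  exists l1 d' l2, [/\ l = l1 ++ d' :: l2, isE d d', ~~ memEd l1 d & ~~ memEd l2 d].
Proof.
move=> Hp Hr /first_split [l1 [x [l2 [El Hx Hn1]]]].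
exists l1, x, l2; split=> //.
apply/negP => /first_split [l3 [y [l4 [El2 Hy Hn3]]]].
have {}Hp : is_path u (l1 ++ (x :: l3 ++ [:: y]) ++ l4) v.
  by rewrite cat_cons -catA /=; move: Hp; rewrite El El2.
have {}Hr : reduced (x :: l3 ++ [:: y]).
  move: Hr; rewrite El El2 => /reduced_catr.
  have -> : x :: l3 ++ y :: l4 = (x :: l3 ++ [:: y]) ++ l4 by rewrite cat_cons -catA.
  exact: reduced_catl.
have [w [_ /is_path_catE [w' [/= [Hxs H3] _]]]] := is_path_catE Hp.
have [w2 [H3' /= [Hys Hy']]] := is_path_catE H3.
have Hxy : y = x \/ y = erev x.
  move: Hx Hy; rewrite /isE => /orP [] /eqP -> /orP [] /eqP ->; rewrite ?Defs.revK; tauto.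
case: Hxy => Exy.
- have Hc : is_path (tgt x) (l3 ++ [:: y]) (tgt x).
    by rewrite -{2}Exy Hy'.
  have := (proj2 T) _ _ Hc (reduced_cons Hr).
  by case: (l3) => [|? ?].
- have Hc : is_path (tgt x) l3 (tgt x).
    by move: H3'; rewrite -Hys Exy.
  have Hl3 : l3 = [::].
    exact: (proj2 T) _ _ Hc (reduced_catl (reduced_cons Hr)).
  by move: Hr; rewrite Hl3 Exy /= => [[]].
Qed.

Lemma pc_simple (X : sgraph) (l1 l2 : seq (edge X)) d d' :
  isE d d' -> ~~ memEd l1 d -> ~~ memEd l2 d ->
  path_chain (l1 ++ d' :: l2) d = if d' == d then 1 else -1.
Proof.
move=> Hd H1 H2; rewrite pc_cat pc_cons !pc_notmem // add0r addr0.
move: Hd; rewrite /isE => /orP [] /eqP ->; first by rewrite eqxx term_self.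
rewrite term_selfr; case: eqP => // H.
by exfalso; apply: (@rev_neq X d).
Qed.

Lemma pc_simple_ne0 (X : sgraph) (T : is_tree X) (u v : vert X) l d :
  is_path u l v -> reduced l -> memEd l d -> path_chain l d != 0.
Proof.
move=> Hp Hr Hm; have [l1 [d' [l2 [-> Hd H1 H2]]]] := simple T Hp Hr Hm.
by rewrite pc_simple //; case: (d' =P d).
Qed.

Lemma side_const (X : sgraph) (T : is_tree X) (e : edge X) (a b : vert X) l d :
  is_path a l b -> ~~ memEd l e -> memEd l d ->
  side T e (src d) = side T e a /\ side T e (tgt d) = side T e a.
Proof.
move=> Hp Hne /first_split [l1 [d' [l2 [El Hd _]]]].
move: Hp; rewrite El => /is_path_catE [w [H1 /= [Hs _]]].
have E1 : side T e (src d') = side T e a.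
  by rewrite Hs (side_diff T e H1) pc_notmem ?addr0 //; apply: contra Hne; rewrite El /memEd has_cat => ->.
have E2 : side T e (tgt d') = side T e a.
  have Hp1 : is_path (src d') [:: d'] (tgt d') by [].
  rewrite (side_diff T e Hp1) E1 pc_cons pc_nil term_notE ?addr0 //.
  by apply: contra Hne => Hi; rewrite El /memEd has_cat /= Hi orbT.
move: Hd E1 E2; rewrite /isE => /orP [] /eqP -> E1 E2; first by [].
by rewrite tgt_rev in E2; split.
Qed.

Lemma gmulVr (F : group) (g : F) : gmul g (ginv g) = gone F.
Proof.
set h := ginv g.
have E : gmul h (gmul g h) = h by rewrite gmulA gmulV gmul1.
by rewrite -[gmul g h]gmul1 -(gmulV h) -gmulA E gmulV.
Qed.

Lemma actK1 (F : group) (X : sgraph) (A : action F X) g e :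
  actE A (ginv g) (actE A g e) = e.
Proof. by rewrite -actEM gmulV actE1. Qed.

Lemma actK2 (F : group) (X : sgraph) (A : action F X) g e :
  actE A g (actE A (ginv g) e) = e.
Proof. by rewrite -actEM gmulVr actE1. Qed.

Lemma eq_act (F : group) (X : sgraph) (A : action F X) g e d :
  (actE A (ginv g) e == d) = (e == actE A g d).
Proof. by apply/eqP/eqP => [<-|->]; rewrite ?actK1 ?actK2. Qed.

Lemma gchainE (F : group) (X : sgraph) (A : action F X) HV HE P g e :
  invariant_subgraph A HV HE ->
  gchain A g (proj_perp HE (path_chain P)) e =
  if HE e then 0 else path_chain (map (actE A g) P) e.
Proof.
case=> _ _ _ H4; rewrite /gchain /proj_perp H4.
case: (HE e) => //; rewrite /path_chain big_map; apply: eq_bigr => d _.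
by rewrite !eq_act act_rev.
Qed.

Lemma path_map (F : group) (X : sgraph) (A : action F X) g u v P :
  is_path u P v -> is_path (actV A g u) (map (actE A g) P) (actV A g v).
Proof.
elim: P u => [|e P IH] u /=; first by move=> ->.
case=> Hs /IH H; split; first by rewrite act_src Hs.
by rewrite /tgt -act_rev act_src.
Qed.

Lemma reduced_map (F : group) (X : sgraph) (A : action F X) g P :
  reduced P -> reduced (map (actE A g) P).
Proof.
elim: P => //= e [|e' P] IH //= [H1 H2]; split; last exact: IH.
rewrite -act_rev => H; apply: H1.
by rewrite -(actK1 A g e') H actK1.
Qed.

Lemma isE_cases (X : sgraph) (d d' : edge X) : isE d d' -> d' = d \/ d' = erev d.
Proof. by rewrite /isE => /orP [] /eqP ->; [left|right]. Qed.

Lemma final (X : sgraph) (T : is_tree X) (a b : vert X) l e f :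
  is_path a l b -> reduced l -> memEd l e -> memEd l f ->
  side T e (src f) != 0 -> side T e (tgt f) != 0 ->
  side T f (src e) != 0 -> side T f (tgt e) != 0 ->
  path_chain l e = - path_chain l f.
Proof.
move=> Hp Hr Hme Hmf Hesf Hetf Hfse Hfte.
have nfe : ~~ isE f e.
  apply/negP => /isE_cases [] Ee.
  - by move: Hfse; rewrite Ee side_src eqxx.
  - by move: Hfte; rewrite Ee tgt_rev side_src eqxx.
have [l1 [e' [l2 [El He' N1 N2]]]] := simple T Hp Hr Hme.
have [m1 [f' [m2 [Em Hf' M1 M2]]]] := simple T Hp Hr Hmf.
have nfe' : ~~ isE f e'.
  move: nfe; case/isE_cases: He' => ->; rewrite // /isE eq_rev (inj_eq (@rev_inj X)).
  by rewrite orbC.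
have Cl : count (isE f) l = 1%N.
  rewrite Em count_cat /= Hf' /=.
  move: M1 M2; rewrite /memEd !has_count !lt0n !negbK => /eqP -> /eqP ->; by [].
have [w [Hl1 /= [Hs' Hl2]]] : exists w, is_path a l1 w /\ is_path w (e' :: l2) b.
  by apply: is_path_catE; rewrite -El.
have [w2 [Hm1 /= [Hs2 Hm2]]] : exists w, is_path a m1 w /\ is_path w (f' :: m2) b.
  by apply: is_path_catE; rewrite -Em.
have ve : path_chain l e = if e' == e then 1 else -1 by rewrite El pc_simple.
have vf : path_chain l f = if f' == f then 1 else -1 by rewrite Em pc_simple.
rewrite ve vf.
case H2: (memEd l2 f).
- have H1 : ~~ memEd l1 f.
    move: Cl; rewrite El count_cat /= (negbTE nfe') /=.
    move: H2; rewrite /memEd !has_count; lia.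
  have [E1 _] := side_const T Hl2 N2 H2.
  have Ee' : e' = e.
    case/isE_cases: He' => // Er; move: Hesf; by rewrite E1 Er tgt_rev side_src eqxx.
  have Sa : side T f a != 0.
    by move: Hfse; rewrite -Ee' Hs' (side_diff T f Hl1) pc_notmem ?addr0.
  have Ef' : f' = erev f.
    case/isE_cases: Hf' => // Ef; move: Sa.
    have Z : side T f (src f') = side T f a.
      by rewrite Hs2 (side_diff T f Hm1) pc_notmem // addr0.
    by rewrite -Z Ef side_src eqxx.
  by rewrite Ee' eqxx Ef' (negbTE (introN eqP (@rev_neq X f))) opprK.
- have H1 : memEd l1 f.
    move: Hmf; rewrite El /memEd has_cat /= (negbTE nfe') /=.
    by move: H2; rewrite /memEd => ->; rewrite orbF.
  have [_ E1] := side_const T Hl1 N1 H1.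
  have Ee' : e' = erev e.
    case/isE_cases: He' => // Er; move: Hetf.
    have Z : side T e (src e') = side T e a.
      by rewrite Hs' (side_diff T e Hl1) pc_notmem // addr0.
    by rewrite E1 -Z Er side_src eqxx.
  have Sb : side T f b != 0.
    by rewrite (side_diff T f Hl2) pc_notmem ?H2 // addr0 Ee' tgt_rev.
  have Ef' : f' = f.
    case/isE_cases: Hf' => // Ef; move: Sb.
    by rewrite (side_diff T f Hm2) pc_notmem // addr0 Ef tgt_rev side_src eqxx.
  rewrite Ee' Ef' eqxx; case: eqP => // H.
  by exfalso; apply: (@rev_neq X e).
Qed.

Lemma mod_ne (m a c : nat) : (0 < c < m)%N -> ((a + c) %% m <> a %% m)%N.
Proof.
move=> /andP [c0 cm] /eqP; rewrite -{2}[a]addn0 eqn_modDl mod0n modn_small //.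
by move=> /eqP Ec; move: c0; rewrite Ec.
Qed.

Lemma core (F : group) (X : sgraph) (A : action F X) (HV : pred (vert X))
  (HE : pred (edge X)) (T : is_tree X) (Hinv : invariant_subgraph A HV HE)
  (u v : vert X) (P : seq (edge X)) (HP : is_path u P v) (HR : reduced P)
  (G2 : GNC2 A HE (proj_perp HE (path_chain P)))
  (q : nat -> F) (m : nat) :
  (3 <= m)%N -> (forall i, q (i + m)%N = q i) ->
  (forall i, T_adj A (proj_perp HE (path_chain P)) (q i) (q i.+1)) ->
  (forall i j, q i = q j -> (i %% m = j %% m)%N) ->
  exists D : nat -> edge X, (forall i, D (i + m)%N = D i) /\
    (forall i, supp (gchain A (q i) (proj_perp HE (path_chain P))) (D i) /\
               supp (gchain A (q i.+1) (proj_perp HE (path_chain P))) (D i)) /\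
    (forall i, gchain A (q i.+1) (proj_perp HE (path_chain P)) (D i) =
             - gchain A (q i.+1) (proj_perp HE (path_chain P)) (D i.+1)).
Proof.
move=> m3 Hper Hadj Hdist.
set rho := proj_perp HE (path_chain P).
set Q := fun g => map (actE A g) P.
set x := fun g => gchain A g rho.
have xE g e : x g e = if HE e then 0 else path_chain (Q g) e.
  exact: gchainE Hinv.
have QP g : is_path (actV A g u) (Q g) (actV A g v) by exact: (path_map A g HP).
have QR g : reduced (Q g) by exact: (reduced_map A g HR).
have HErev e : HE (erev e) = HE e by case: Hinv.
have supp_mem g e : supp (x g) e -> ~~ HE e /\ memEd (Q g) e.
  rewrite /supp xE; case: (HE e); first by rewrite eqxx.
  by move=> H; split=> //; apply: pc_mem.
have mem_supp g e : ~~ HE e -> memEd (Q g) e -> supp (x g) e.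
  by move=> nH Hm; rewrite /supp xE (negbTE nH); apply: pc_simple_ne0 (QP g) (QR g) Hm.
have x_rev g e : x g (erev e) = - x g e.
  by rewrite !xE HErev; case: (HE e); rewrite ?oppr0 // pc_revl.
have supp_rev g e : supp (x g) (erev e) = supp (x g) e.
  by rewrite /supp x_rev oppr_eq0.
have notin g0 g1 g e : supp (x g0) e -> supp (x g1) e -> g0 <> g1 -> g <> g0 ->
    g <> g1 -> ~~ memEd (Q g) e.
  move=> H0 H1 n01 n0 n1; apply/negP => Hm.
  have [nH _] := supp_mem _ _ H0.
  have Hg := mem_supp _ _ nH Hm.
  have [g1' [g2' [_ _ _ Hall _]]] := G2 e nH.
  have := Hall _ H0; have := Hall _ H1; have := Hall _ Hg.
  clear -n01 n0 n1; intuition congruence.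
have qne i c : (0 < c < m)%N -> q (i + c)%N <> q i.
  by move=> Hc /Hdist; apply: mod_ne.
have [e0 _] := proj2 (Hadj 0%N).
set B := fun g h => epsilon (inhabits e0) (fun e => supp (x g) e /\ supp (x h) e).
have B_spec i : supp (x (q i)) (B (q i) (q i.+1)) /\ supp (x (q i.+1)) (B (q i) (q i.+1)).
  exact: (epsilon_spec (inhabits e0) _ (proj2 (Hadj i))).
set D := fun i => let e := B (q i) (q i.+1) in
  if side T e (actV A (q i.+2) u) == 0 then erev e else e.
have DB i : D i = B (q i) (q i.+1) \/ D i = erev (B (q i) (q i.+1)).
  by rewrite /D; case: ifP; [right|left].
have D_supp i : supp (x (q i)) (D i) /\ supp (x (q i.+1)) (D i).
  by case: (DB i) => ->; rewrite ?supp_rev; apply: B_spec.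
have D_side i : side T (D i) (actV A (q i.+2) u) != 0.
  rewrite /D /=; case: ifP => [/eqP H|/negbT //].
  by rewrite side_rev H subr0 oner_eq0.
exists D; split.
  by move=> i; rewrite /D -!addSn !Hper.
split; first exact: D_supp.
have qne' a b : (a < b < a + m)%N -> q b <> q a.
  move=> H; have -> : b = (a + (b - a))%N by clear -H; lia.
  apply: qne; clear -H; lia.
move=> i.
have [Se0 Se1] := D_supp i.
have [Sf1 Sf2] := D_supp i.+1.
have [nHe Me1] := supp_mem _ _ Se1.
have [_ Me0] := supp_mem _ _ Se0.
have [nHf Mf1] := supp_mem _ _ Sf1.
have [_ Mf2] := supp_mem _ _ Sf2.
have n01 : q i.+1 <> q i by apply: qne'; clear -m3; lia.
have n02 : q i.+2 <> q i by apply: qne'; clear -m3; lia.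
have n12 : q i.+2 <> q i.+1 by apply: qne'; clear -m3; lia.
have Ne2 : ~~ memEd (Q (q i.+2)) (D i).
  by apply: (notin (q i) (q i.+1)) => // H; apply: n01.
have [Hesf Hetf] := side_const T (QP (q i.+2)) Ne2 Mf2.
have step : forall n, (n + 3 <= m)%N ->
    side T (D i.+1) (actV A (q (i + (n + 3))%N) u) = side T (D i.+1) (actV A (q i.+3) u).
  elim=> [|n IH] Hn.
    by have -> : (i + (0 + 3))%N = i.+3 by clear; lia.
  set k := (i + (n + 3))%N.
  have -> : (i + (n.+1 + 3))%N = k.+1 by rewrite /k; clear; lia.
  have [Sd0 Sd1] := B_spec k.
  have Nk : ~~ memEd (Q (q k)) (D i.+1).
    apply: (notin (q i.+1) (q i.+2)) => //; first by move=> H; apply: n12.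
      by apply: qne'; rewrite /k; clear -Hn; lia.
    by apply: qne'; rewrite /k; clear -Hn; lia.
  have Nk1 : ~~ memEd (Q (q k.+1)) (D i.+1).
    apply: (notin (q i.+1) (q i.+2)) => //; first by move=> H; apply: n12.
      by apply: qne'; rewrite /k; clear -Hn; lia.
    by apply: qne'; rewrite /k; clear -Hn; lia.
  have [E0 _] := side_const T (QP (q k)) Nk (supp_mem _ _ Sd0).2.
  have [E1 _] := side_const T (QP (q k.+1)) Nk1 (supp_mem _ _ Sd1).2.
  by rewrite -E1 E0 IH //; clear -Hn; lia.
have Hq0 : side T (D i.+1) (actV A (q i) u) = side T (D i.+1) (actV A (q i.+3) u).
  have := step (m - 3)%N; have -> : (i + (m - 3 + 3))%N = (i + m)%N by clear -m3; lia.
  by rewrite Hper; apply; clear -m3; lia.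
have Ne0 : ~~ memEd (Q (q i)) (D i.+1).
  apply: (notin (q i.+1) (q i.+2)) => //; first by move=> H; apply: n12.
    by move=> H; apply: n01.
  by move=> H; apply: n02.
have [Hfse Hfte] := side_const T (QP (q i)) Ne0 Me0.
have Sf := D_side i.+1.
have Se := D_side i.
move: (xE (q i.+1) (D i)) (xE (q i.+1) (D i.+1)); rewrite /x /rho => -> ->; rewrite (negbTE nHe) (negbTE nHf).
apply: (final (QP (q i.+1)) (QR _) Me1 Mf1).
- by rewrite Hesf.
- by rewrite Hetf.
- by rewrite Hfse Hq0.
- by rewrite Hfte Hq0.
Qed.

Lemma x_rev_g (F : group) (X : sgraph) (A : action F X) HV HE P g e :
  invariant_subgraph A HV HE ->
  gchain A g (proj_perp HE (path_chain P)) (erev e) =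
  - gchain A g (proj_perp HE (path_chain P)) e.
Proof.
move=> Hinv; rewrite !(gchainE _ _ _ Hinv).
have -> : HE (erev e) = HE e by case: Hinv.
by case: (HE e); rewrite ?oppr0 // pc_revl.
Qed.

Theorem lemma5p4 (F : group) (X : sgraph) (A : action F X)
    (HV : pred (vert X)) (HE : pred (edge X)) (f : lift_data F X)
    (rho : chain X) (p : nat -> F) (m : nat) :
  deck_action A ->
  invariant_subgraph A HV HE ->
  lift_of_he_preserving_H A HV HE f ->
  geometric_nielsen A HE f rho ->
  (1 <= m)%N ->
  T_edge_path A rho p m ->
  p 0%N = p m ->
  (exists j k, [/\ (j < m)%N, (k < m)%N, j <> k & p j = p k]) \/
  orientation A rho p m.
Proof.
move=> Hdeck Hinv _ Hgn m1 Hpath Hp0.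
case: (classic (exists j k, [/\ (j < m)%N, (k < m)%N, j <> k & p j = p k])) => [H|Hn];
  [by left|right].
case: Hdeck => T _ _ _ _.
case: Hgn => u [v [P [_ [_ [HP [HR [Erho [_ [G2 _]]]]]]]]].
subst rho.
have xr g e : gchain A g (proj_perp HE (path_chain P)) (erev e) =
  - gchain A g (proj_perp HE (path_chain P)) e by apply: x_rev_g Hinv.
have sr g e : supp (gchain A g (proj_perp HE (path_chain P))) (erev e) =
              supp (gchain A g (proj_perp HE (path_chain P))) e.
  by rewrite /supp xr oppr_eq0.
case: m m1 Hpath Hp0 Hn => [|[|[|m']]] // _ Hpath Hp0 Hn.
-
  by have [] := Hpath 1%N isT; rewrite /= Hp0.
-
  have [n01 [d [S0 S1]]] := Hpath 1%N isT.
  exists (fun j => if j == 1%N then d else erev d); split=> //.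
  + move=> j /andP [j1 j2]; case: j j1 j2 => [|[|[|j]]] //= _ _.
    by rewrite !sr -Hp0.
  + by case=> [|[|j]] //= _; rewrite xr ?opprK.
set m := m'.+3.
set q := fun i => p (i %% m)%N.
have m0 : (0 < m)%N by [].
have qp j : (j <= m)%N -> q j = p j.
  rewrite /q leq_eqVlt => /orP [/eqP ->|Hj]; first by rewrite modnn.
  by rewrite modn_small.
have Hper i : q (i + m)%N = q i by rewrite /q modnDr.
have Hadj i : T_adj A (proj_perp HE (path_chain P)) (q i) (q i.+1).
  have Hi : (i %% m < m)%N by rewrite ltn_pmod.
  have := Hpath (i %% m).+1; rewrite /= => /(_ Hi) H.
  have E : (i.+1 %% m = (i %% m).+1 %% m)%N by rewrite -addn1 -modnDml addn1.
  rewrite /q E; case: (ltngtP (i %% m).+1 m) => Hc.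
  - by rewrite (modn_small Hc).
  - by move: Hc; rewrite ltnS leqNgt Hi.
  - by rewrite Hc modnn Hp0; move: H; rewrite Hc.
have Hdist i j : q i = q j -> (i %% m = j %% m)%N.
  move=> Hq; apply/eqP/negP => /negP Hne; apply: Hn.
  exists (i %% m)%N, (j %% m)%N; split; rewrite ?ltn_pmod //.
  by move/eqP: Hne.
have [D [DP [DS DC]]] := core T Hinv HP HR G2 (isT : (3 <= m)%N) Hper Hadj Hdist.
exists (fun j => if j == 0%N then D m.-1 else D j.-1); split.
- by [].
- move=> j /andP [j1 j2]; rewrite -(qp _ j2).
  have Hj : j != 0%N by rewrite -lt0n.
  rewrite (negbTE Hj) -(qp j.-1); last by apply: leq_trans (leq_pred j) j2.
  by have := DS j.-1; rewrite prednK.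
- case=> [|j] Hj /=.
  + have := DC m.-1; rewrite prednK // -(add0n m) DP add0n.
    by rewrite qp // -Hp0.
  + rewrite -qp; last exact: ltnW.
    exact: DC j.
Qed.
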